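(* For any prime number $p$ and any integer $n\ge 1$, $F(p,n)=p^{n-1}(p^n+p-1)$.
   Context: For a prime $p$ and $n\ge 1$, $r(p,n)$ denotes the number of orbits of the left action of $\mathrm{SL}(2,\mathbb{Z})$ on $(\mathbb{Z}_p\times\mathbb{Z}_p)^n$, where elements of $(\mathbb{Z}_p\times\mathbb{Z}_p)^n$ are viewed as $2\times n$ matrices over $\mathbb{Z}_p$ and a matrix in $\mathrm{SL}(2,\mathbb{Z})$ acts by left matrix multiplication with entries reduced modulo $p$. Define $F(p,n):=r(p,n+1)-r(p,n)$ for $n\ge 1$. *)

(* Defs.v *)
From mathcomp Require Import all_boot all_order all_algebra.
From Stdlib Require Import ClassicalDescription.
Set Implicit Arguments. Unset Strict Implicit. Unset Printing Implicit Defensive.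
Import GRing.Theory.
Local Open Scope ring_scope.

(* Elements of (Z_p x Z_p)^n are 2 x n matrices over 'F_p (= Z/pZ for prime p).
   A matrix M in SL(2,Z) acts by left multiplication with entries reduced mod p. *)

Definition reduce_mx (p : nat) (M : 'M[int]_2) : 'M['F_p]_2 :=
  map_mx (fun z : int => z%:~R) M.

Definition sl2_orbit_rel (p n : nat) (x y : 'M['F_p]_(2, n)) : Prop :=
  exists M : 'M[int]_2, \det M = 1 /\ reduce_mx p M *m x = y.

Definition sl2_orbit (p n : nat) (x : 'M['F_p]_(2, n)) : {set 'M['F_p]_(2, n)} :=
  [set y | if excluded_middle_informative (sl2_orbit_rel x y) then true else false].

Definition r (p n : nat) : nat :=
  #|[set sl2_orbit x | x : 'M['F_p]_(2, n)]|.

Definition F (p n : nat) : int := (r p n.+1)%:Z - (r p n)%:Z.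

(* Main.v *)
Require Import Defs.
From mathcomp Require Import all_boot all_order all_algebra.
From mathcomp Require Import ring zify.
From Stdlib Require Import ClassicalDescription.
Set Implicit Arguments. Unset Strict Implicit. Unset Printing Implicit Defensive.
Import GRing.Theory Num.Theory.
Local Open Scope ring_scope.

Lemma ord2_cases (i : 'I_2) : i = 0 \/ i = 1.
Proof. case: i => [[|[|//]]] Hi; [left|right]; exact: val_inj. Qed.

Section MK2.
Variable R : comNzRingType.
Definition mk2 (a b c d : R) : 'M[R]_2 :=
  \matrix_(i < 2, j < 2) (if i == 0 then (if j == 0 then a else b) else (if j == 0 then c else d)).

Lemma mk2E (A : 'M[R]_2) : A = mk2 (A 0 0) (A 0 1) (A 1 0) (A 1 1).
Proof. by apply/matrixP => i j; rewrite mxE; case: (ord2_cases i) => ->; case: (ord2_cases j) => ->. Qed.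

Lemma mul_mk2 a b c d a' b' c' d' :
  mk2 a b c d *m mk2 a' b' c' d' =
  mk2 (a * a' + b * c') (a * b' + b * d') (c * a' + d * c') (c * b' + d * d').
Proof. apply/matrixP => i j; rewrite !mxE !big_ord_recl big_ord0 !mxE addr0 /=; case: (ord2_cases i) => ->; by case: (ord2_cases j) => -> /=. Qed.

Lemma det_mk2 a b c d : \det (mk2 a b c d) = a * d - b * c.
Proof.
rewrite (expand_det_row _ 0) !big_ord_recl big_ord0 /cofactor !det_mx11 !mxE /=.
rewrite !expr0 !expr1 /=. ring.
Qed.
End MK2.

Section Lift.
Variable p : nat.
Hypothesis pp : prime p.
Local Notation F := 'F_p.

Lemma reduce_mk2 (a b c d : int) :
  reduce_mx p (mk2 a b c d) = mk2 a%:~R b%:~R c%:~R d%:~R.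
Proof.
apply/matrixP => i j; rewrite !mxE.
by case: (ord2_cases i) => ->; case: (ord2_cases j) => ->.
Qed.

Definition liftable (A : 'M[F]_2) := exists M : 'M[int]_2, \det M = 1 /\ reduce_mx p M = A.

Lemma liftable_mul A B : liftable A -> liftable B -> liftable (A *m B).
Proof.
move=> [M [dM <-]] [N [dN <-]]; exists (M *m N); split.
  by rewrite det_mulmx dM dN mulr1.
rewrite [M]mk2E [N]mk2E mul_mk2 !reduce_mk2 mul_mk2.
by rewrite !intrD !intrM.
Qed.

Lemma intr_Fp (t : F) : ((t : nat)%:Z)%:~R = t.
Proof. exact: (natr_Zp t). Qed.

Lemma liftable_E (t : F) : liftable (mk2 1 t 0 1).
Proof.
exists (mk2 1 (t : nat)%:Z 0 1); split; first by rewrite det_mk2; ring.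
by rewrite reduce_mk2 intr_Fp.
Qed.

Lemma liftable_L (t : F) : liftable (mk2 1 0 t 1).
Proof.
exists (mk2 1 0 (t : nat)%:Z 1); split; first by rewrite det_mk2; ring.
by rewrite reduce_mk2 intr_Fp.
Qed.

Lemma liftable_det1 (A : 'M[F]_2) : \det A = 1 -> liftable A.
Proof.
rewrite [A]mk2E det_mk2.
move: (A 0 0) (A 0 1) (A 1 0) (A 1 1) => a b c d hd.
have key : forall a b c d : F, a * d - b * c = 1 -> c != 0 -> liftable (mk2 a b c d).
  move=> a' b' c' d' hd' hc.
  have -> : mk2 a' b' c' d' = mk2 1 ((a' - 1) / c') 0 1 *m mk2 1 0 c' 1 *m mk2 1 ((d' - 1) / c') 0 1.
    have e : b' = (a' * d' - 1) / c' by rewrite -hd'; field.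
    rewrite !mul_mk2; congr mk2; try (field; done).
    by rewrite {1}e; field.
  by apply: liftable_mul; [apply: liftable_mul|]; [apply: liftable_E|apply: liftable_L|apply: liftable_E].
have [c0|cn0] := eqVneq c 0; last exact: key.
have ha : a != 0.
  apply/eqP => a0; move: hd; rewrite a0 c0 mul0r mulr0 subr0 => /esym/eqP; by rewrite oner_eq0.
have -> : mk2 a b c d = mk2 1 0 (-1) 1 *m mk2 a b (a + c) (b + d).
  by rewrite mul_mk2; congr mk2; ring.
apply: liftable_mul; first exact: liftable_L.
apply: key; last by rewrite c0 addr0.
by rewrite -hd; ring.
Qed.

End Lift.

Lemma card_imset_ker (T T1 T2 : finType) (f : T -> T1) (g : T -> T2) :
  (forall x y, (f x == f y) = (g x == g y)) -> #|f @: T| = #|g @: T|.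
Proof.
move=> hk.
pose h (z : T1) : option T2 := omap g [pick x | f x == z].
have hf : forall x, h (f x) = Some (g x).
  move=> x; rewrite /h; case: pickP => [x' /eqP e|/(_ x)]; last by rewrite eqxx.
  by congr Some; apply/eqP; rewrite -hk e.
have -> : #|g @: T| = #|(Some \o g) @: T|.
  by rewrite (imset_comp Some g) card_imset //; move=> a b [->].
have -> : (Some \o g) @: T = h @: (f @: T).
  rewrite -imset_comp; apply: eq_imset => x /=; by rewrite hf.
rewrite card_in_imset //.
move=> _ _ /imsetP [x _ ->] /imsetP [y _ ->]; rewrite !hf => -[] /eqP.
by rewrite -hk => /eqP.
Qed.

Lemma card_classes (T : finType) (O : T -> {set T}) :
  (forall x, x \in O x) -> (forall x y, y \in O x -> O y = O x) ->
  (#|[set O x | x in T]|%:R : rat) = \sum_x (#|O x|%:R)^-1.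
Proof.
move=> hr hs.
rewrite (partition_big_imset O) /= -sum1_card natr_sum.
apply: eq_bigr => _ /imsetP [x0 _ ->].
rewrite (eq_bigl (fun x => x \in O x0)); last first.
  move=> x /=; apply/eqP/idP => [<-|hx]; first exact: hr.
  exact: hs.
rewrite (eq_bigr (fun _ => (#|O x0|%:R)^-1)); last by move=> x hx; rewrite (hs _ _ hx).
rewrite sumr_const -[RHS]mulr_natr mulVf //.
by rewrite pnatr_eq0 -lt0n; apply/card_gt0P; exists x0.
Qed.

Section Orb.
Variable p : nat.
Hypothesis pp : prime p.
Local Notation F := 'F_p.

Definition SL : {set 'M[F]_2} := [set A | \det A == 1].
Definition orb n (x : 'M[F]_(2, n)) := [set A *m x | A in SL].

Lemma det_reduce (M : 'M[int]_2) : \det M = 1 -> \det (reduce_mx p M) = 1.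
Proof.
rewrite [M]mk2E reduce_mk2 !det_mk2 => h.
by rewrite -!intrM -intrB h.
Qed.

Lemma sl2_orbitE n (x : 'M[F]_(2, n)) : sl2_orbit x = orb x.
Proof.
apply/setP => y; rewrite inE; case: excluded_middle_informative => h.
  case: h => M [dM e]; apply/esym/imsetP; exists (reduce_mx p M) => //.
  by rewrite inE det_reduce.
apply/esym/negP => /imsetP [A]; rewrite inE => /eqP dA ey; apply: h.
have [M [dM eM]] := liftable_det1 dA.
by exists M; rewrite eM.
Qed.

Lemma rE n : r p n = #|[set orb x | x : 'M[F]_(2, n)]|.
Proof. by rewrite /r (eq_imset _ (@sl2_orbitE n)). Qed.

Lemma unit_det1 (A : 'M[F]_2) : \det A = 1 -> A \in unitmx.
Proof. by move=> h; rewrite unitmxE h unitr1. Qed.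

Lemma orb_refl n (x : 'M[F]_(2, n)) : x \in orb x.
Proof. by apply/imsetP; exists 1%:M; rewrite ?mul1mx // inE det1. Qed.

Lemma orb_trans n (x y : 'M[F]_(2, n)) : y \in orb x -> orb y = orb x.
Proof.
move=> /imsetP [B]; rewrite inE => /eqP dB ->.
apply/setP => z; apply/imsetP/imsetP => -[A]; rewrite inE => /eqP dA ->.
  by exists (A *m B); rewrite ?mulmxA // inE det_mulmx dA dB mulr1.
exists (A *m invmx B); last by rewrite -mulmxA (mulmxA (invmx B)) mulVmx ?mul1mx // unit_det1.
by rewrite inE det_mulmx det_inv dA dB invr1 mulr1.
Qed.

Lemma orb_eq n (x y : 'M[F]_(2, n)) : (orb x == orb y) = (y \in orb x).
Proof.
apply/eqP/idP => [e|h]; first by rewrite e orb_refl.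
by rewrite (orb_trans h).
Qed.

Definition u (b : F) : 'M[F]_2 := mk2 1 b 0 1.
Definition CU n (W : 'M[F]_(2, n)) := [set u b *m W | b : F].

Lemma u0 : u 0 = 1%:M.
Proof. by apply/matrixP => i j; rewrite !mxE; case: (ord2_cases i) => ->; case: (ord2_cases j) => ->. Qed.

Lemma uM b b' : u b *m u b' = u (b + b').
Proof. by rewrite /u mul_mk2; congr mk2; ring. Qed.

Lemma CU_refl n (x : 'M[F]_(2, n)) : x \in CU x.
Proof. by apply/imsetP; exists 0; rewrite // u0 mul1mx. Qed.

Lemma CU_trans n (x y : 'M[F]_(2, n)) : y \in CU x -> CU y = CU x.
Proof.
move=> /imsetP [b _ ->].
apply/setP => z; apply/imsetP/imsetP => -[a _ ->].
  by exists (a + b); rewrite // mulmxA uM.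
by exists (a - b); rewrite // mulmxA uM subrK.
Qed.

Lemma CU_eq n (x y : 'M[F]_(2, n)) : (CU x == CU y) = (y \in CU x).
Proof.
apply/eqP/idP => [e|h]; first by rewrite e CU_refl.
by rewrite (CU_trans h).
Qed.

End Orb.

Section Ker.
Variable p : nat.
Hypothesis pp : prime p.
Local Notation F := 'F_p.

Definition e1 : 'cV[F]_2 := \col_(i < 2) (if i == 0 then 1 else 0).

Lemma cV2_eq (c d : 'cV[F]_2) : c 0 0 = d 0 0 -> c 1 0 = d 1 0 -> c = d.
Proof.
move=> h0 h1; apply/matrixP => i j; rewrite (ord1 j).
by case: (ord2_cases i) => ->.
Qed.

Lemma mul_e1 (B : 'M[F]_2) : B *m e1 = \col_i B i 0.
Proof.
apply/matrixP => i j; rewrite (ord1 j) !mxE !big_ord_recl big_ord0 !mxE /=.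
by rewrite mulr1 mulr0 !addr0.
Qed.

Definition kvec (c : 'cV[F]_2) : 'M[F]_2 :=
  if c 0 0 != 0 then mk2 (c 0 0) 0 (c 1 0) (c 0 0)^-1
  else mk2 0 (- (c 1 0)^-1) (c 1 0) 0.
Definition gmat c := invmx (kvec c).

Lemma cV2_nz (c : 'cV[F]_2) : c != 0 -> c 0 0 = 0 -> c 1 0 != 0.
Proof.
move=> hc h0; apply/eqP => h1; move/eqP: hc; apply.
by apply: cV2_eq; rewrite mxE.
Qed.

Lemma kvec_e1 c : c != 0 -> kvec c *m e1 = c.
Proof.
move=> hc; rewrite mul_e1; apply: cV2_eq; rewrite !mxE /kvec;
  by case: ifP => h; rewrite !mxE /= //; move/negbFE/eqP: h.
Qed.

Lemma det_kvec c : c != 0 -> \det (kvec c) = 1.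
Proof.
move=> hc; rewrite /kvec; case: ifP => h; rewrite det_mk2.
  by rewrite mul0r subr0 mulfV.
move/negbFE/eqP: h => h.
by rewrite mul0r sub0r mulNr opprK mulVf // cV2_nz.
Qed.

Lemma det_gmat c : c != 0 -> \det (gmat c) = 1.
Proof. by move=> hc; rewrite det_inv det_kvec ?invr1. Qed.

Lemma gmat_kvec c : c != 0 -> gmat c *m kvec c = 1%:M.
Proof. by move=> hc; rewrite mulVmx // unit_det1 // det_kvec. Qed.

Lemma kvec_gmat c : c != 0 -> kvec c *m gmat c = 1%:M.
Proof. by move=> hc; rewrite mulmxV // unit_det1 // det_kvec. Qed.

Lemma gmat_c c : c != 0 -> gmat c *m c = e1.
Proof. by move=> hc; rewrite -[X in _ *m X](kvec_e1 hc) mulmxA gmat_kvec // mul1mx. Qed.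

Lemma ue1 b : u b *m e1 = e1.
Proof. by rewrite mul_e1; apply: cV2_eq; rewrite !mxE. Qed.

Lemma orb_rowP n (c c' : 'cV[F]_2) (Z Z' : 'M[F]_(2, n)) :
  reflect (exists A, [/\ \det A = 1, A *m c = c' & A *m Z = Z'])
          (row_mx c' Z' \in orb (row_mx c Z : 'M_(2, 1 + n))).
Proof.
apply: (iffP imsetP) => [[A]|[A [dA e1' e2]]].
  rewrite inE => /eqP dA; rewrite mul_mx_row => /eq_row_mx [h1 h2].
  by exists A; split.
by exists A; rewrite ?inE ?dA // mul_mx_row e1' e2.
Qed.

Lemma inl_eqE (A B : eqType) (a b : A) : (@inl A B a == inl b) = (a == b).
Proof. by []. Qed.
Lemma inr_eqE (A B : eqType) (a b : B) : (@inr A B a == inr b) = (a == b).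
Proof. by []. Qed.
Lemma inlr_eqE (A B : eqType) (a : A) (b : B) : (inl a == inr b) = false.
Proof. by []. Qed.
Lemma inrl_eqE (A B : eqType) (a : A) (b : B) : (inr b == inl a) = false.
Proof. by []. Qed.

Definition phi n (X : 'M[F]_(2, 1 + n)) : {set 'M[F]_(2, n)} + {set 'M[F]_(2, n)} :=
  if lsubmx X == 0 then inl (orb (rsubmx X))
  else inr (CU (gmat (lsubmx X) *m rsubmx X)).

Lemma phi_ker n (X Y : 'M[F]_(2, 1 + n)) : (orb X == orb Y) = (phi X == phi Y).
Proof.
rewrite -[X]hsubmxK -[Y]hsubmxK /phi !row_mxKl !row_mxKr orb_eq.
move: (lsubmx X) (rsubmx X) (lsubmx Y) (rsubmx Y) => c Z c' Z'.
case: (eqVneq c 0) => [->|hc]; case: (eqVneq c' 0) => [->|hc'] /=.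
- rewrite inl_eqE orb_eq; apply/orb_rowP/idP => [[A [dA _ <-]]|/imsetP [A]].
    by apply/imsetP; exists A; rewrite // inE dA.
  by rewrite inE => /eqP dA ->; exists A; rewrite mulmx0.
- rewrite inlr_eqE; apply/negP => /orb_rowP [A [_ h _]]; move: hc'; by rewrite -h mulmx0 eqxx.
- rewrite inrl_eqE; apply/negP => /orb_rowP [A [dA h _]]; move: hc.
  have: invmx A *m (A *m c) = c by rewrite mulmxA mulVmx ?mul1mx // unit_det1.
  by rewrite h mulmx0 => <-; rewrite eqxx.
- rewrite inr_eqE CU_eq; apply/orb_rowP/imsetP => [[A [dA Ac AZ]]|[b _ e]].
  + pose B := gmat c' *m A *m kvec c.
    have hB1 : B *m e1 = e1 by rewrite /B -!mulmxA kvec_e1 // Ac gmat_c.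
    have dB : \det B = 1 by rewrite /B !det_mulmx det_gmat // dA det_kvec // !mulr1.
    have h00 : B 0 0 = 1 by have := congr1 (fun M : 'cV[F]_2 => M 0 0) hB1; rewrite mul_e1 !mxE.
    have h10 : B 1 0 = 0 by have := congr1 (fun M : 'cV[F]_2 => M 1 0) hB1; rewrite mul_e1 !mxE.
    have h11 : B 1 1 = 1.
      by move: dB; rewrite {1}[B]mk2E det_mk2 h00 h10 mul1r mulr0 subr0.
    have eB : B = u (B 0 1) by rewrite {1}[B]mk2E h00 h10 h11.
    exists (B 0 1) => //; rewrite -eB /B -!mulmxA (mulmxA (kvec c)) kvec_gmat //.
    by rewrite mul1mx AZ.
  + exists (kvec c' *m u b *m gmat c); split.
    * by rewrite !det_mulmx det_kvec // det_gmat // /u det_mk2; ring.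
    * by rewrite -!mulmxA gmat_c // ue1 kvec_e1.
    * by rewrite -!mulmxA -e mulmxA kvec_gmat // mul1mx.
Qed.

End Ker.

Section Rec.
Variable p : nat.
Hypothesis pp : prime p.
Local Notation F := 'F_p.

Definition s n := #|[set CU W | W : 'M[F]_(2, n)]|.

Lemma e1_nz : e1 p != 0.
Proof. by apply/eqP => /matrixP /(_ 0 0); rewrite !mxE /= => /eqP; rewrite oner_eq0. Qed.

Lemma gmat_e1 : gmat (e1 p) = 1%:M.
Proof.
rewrite /gmat /kvec mxE /= !mxE /= invr1.
have -> : mk2 1 0 0 1 = u 0 by [].
by rewrite u0 invmx1.
Qed.

Lemma r_rec n : r p n.+1 = (r p n + s n)%N.
Proof.
rewrite !rE.
rewrite (@card_imset_ker _ _ _ (@orb p n.+1) (@phi p n) (@phi_ker p n)).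
have -> : [set phi X | X : 'M[F]_(2, 1 + n)] =
  inl @: [set orb Z | Z : 'M[F]_(2, n)] :|: inr @: [set CU W | W : 'M[F]_(2, n)].
  apply/setP => z; apply/imsetP/setUP.
    move=> [X _ ->]; rewrite /phi; case: ifP => _; [left|right].
      by rewrite imset_f // imset_f.
    by rewrite imset_f // imset_f.
  case=> [/imsetP [_ /imsetP [Z _ ->] ->]|/imsetP [_ /imsetP [W _ ->] ->]].
    by exists (row_mx 0 Z) => //; rewrite /phi row_mxKl eqxx row_mxKr.
  exists (row_mx (e1 p) W) => //; rewrite /phi row_mxKl row_mxKr (negbTE e1_nz).
  by rewrite gmat_e1 mul1mx.
have il : injective (@inl {set 'M[F]_(2, n)} {set 'M[F]_(2, n)}) by move=> a b [].
have ir : injective (@inr {set 'M[F]_(2, n)} {set 'M[F]_(2, n)}) by move=> a b [].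
rewrite cardsU; set I := (X in (_ - #|X|)%N).
have -> : #|I| = 0%N.
  apply/eqP; rewrite eqn0Ngt; apply/negP => /card_gt0P [z].
  by rewrite /I !inE => /andP [/imsetP [a _ ->] /imsetP [b _]].
by rewrite subn0 (card_imset _ il) (card_imset _ ir).
Qed.

End Rec.

Section S.
Variable p : nat.
Hypothesis pp : prime p.
Local Notation F := 'F_p.

Lemma lift01 : lift ord0 ord0 = 1 :> 'I_2. Proof. exact: val_inj. Qed.
Lemma ord0_2 : ord0 = 0 :> 'I_2. Proof. exact: val_inj. Qed.

Lemma uW0 n b (W : 'M[F]_(2, n)) j : (u b *m W) 0 j = W 0 j + b * W 1 j.
Proof. by rewrite !mxE !big_ord_recl big_ord0 !mxE /= mul1r addr0 lift01 ord0_2. Qed.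

Lemma uW1 n b (W : 'M[F]_(2, n)) j : (u b *m W) 1 j = W 1 j.
Proof. by rewrite !mxE !big_ord_recl big_ord0 !mxE /= mul0r add0r mul1r addr0 lift01. Qed.

Lemma CU_card n (W : 'M[F]_(2, n)) :
  #|CU W| = if [forall j, W 1 j == 0] then 1%N else p.
Proof.
case: ifP => [/forallP hW|/negbT /forallPn [j hj]].
  have -> : CU W = [set W].
    apply/setP => y; rewrite inE; apply/imsetP/eqP => [[b _ ->]|->]; last first.
      by exists 0; rewrite // u0 mul1mx.
    apply/matrixP => i j; case: (ord2_cases i) => ->.
      by rewrite uW0 (eqP (hW j)) mulr0 addr0.
    by rewrite uW1.
  by rewrite cards1.
rewrite /CU card_imset ?card_Fp //.
move=> a b /matrixP /(_ 0 j); rewrite !uW0 => /addrI.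
by apply: mulIf.
Qed.

Definition Pset n := [set W : 'M[F]_(2, n) | [forall j, W 1 j == 0]].

Lemma card_P n : #|Pset n| = (p ^ n)%N.
Proof.
pose f (z : 'rV[F]_n) : 'M[F]_(2, n) := \matrix_(i, j) if i == 0 then z 0 j else 0.
have -> : Pset n = f @: [set: 'rV[F]_n].
  apply/setP => W; rewrite inE; apply/forallP/imsetP => [hW|[z _ ->] j].
    exists (row 0 W) => //; apply/matrixP => i j; rewrite !mxE.
    by case: (ord2_cases i) => -> /=; rewrite ?mxE // (eqP (hW j)).
  by rewrite mxE.
rewrite card_imset; last first.
  move=> a b /matrixP h; apply/matrixP => i j; rewrite (ord1 i).
  by have := h 0 j; rewrite !mxE.
by rewrite cardsT card_mx card_Fp // mul1n.
Qed.

Lemma s_val n : ((s p n)%:R : rat) = (p ^ n)%:R + ((p ^ (2 * n))%:R - (p ^ n)%:R) / p%:R.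
Proof.
rewrite /s card_classes; last first.
- by move=> x y; exact: CU_trans.
- by move=> x; exact: CU_refl.
rewrite (bigID (fun W => W \in Pset n)) /=.
rewrite [X in X + _](eq_bigr (fun _ => 1)) => [|W]; last by rewrite inE => h; rewrite CU_card h invr1.
rewrite [X in _ + X](eq_bigr (fun _ => (p%:R)^-1)) => [|W]; last by rewrite inE => /negbTE h; rewrite CU_card h.
rewrite !sumr_const card_P.
set k := #|_|.
have hk : k = (p ^ (2 * n) - p ^ n)%N.
  have := cardC (Pset n); rewrite card_P card_mx card_Fp // => <-.
  by rewrite addKn.
have hle : (p ^ n <= p ^ (2 * n))%N.
  by rewrite leq_exp2l ?prime_gt1 // leq_pmull.
by rewrite hk -[_^-1 *+ _]mulr_natr natrB // mulrC.
Qed.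

End S.

Lemma s_formula p m : prime p -> s p m.+1 = (p ^ m * (p ^ m.+1 + p - 1))%N.
Proof.
move=> pp; apply/eqP; rewrite -(eqr_nat rat) s_val //; apply/eqP.
have hp : (p%:R : rat) != 0 by rewrite pnatr_eq0 -lt0n prime_gt0.
have h1 : (1 <= p ^ m.+1 + p)%N by rewrite (leq_trans (prime_gt0 pp)) // leq_addl.
rewrite natrM natrB // natrD !natrX.
have -> : (2 * m.+1 = (m + m).+2)%N by lia.
rewrite !exprS exprD.
set x := (p%:R : rat); set y := x ^+ m.
by field.
Qed.

Theorem lemma4p2 (p n : nat) :
  prime p -> (1 <= n)%N ->
  F p n = ((p ^ n.-1 * (p ^ n + p - 1))%N)%:Z.
Proof.
move=> pp; case: n => [//|m] _.
rewrite /F r_rec // PoszD addrAC subrr add0r.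
by rewrite s_formula.
Qed.
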